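(* Let $T:X\rightrightarrows X^*$ be a pseudomonotone operator. If $\widehat{T}=T^\rho_D$, then $T$ is $D$-maximal pseudomonotone. Moreover, if $\mathrm{dom}(T)$ is convex, the converse holds: if $T$ is $D$-maximal pseudomonotone then $\widehat T=T^\rho_D$.
   Context: $X$ is a real Banach space with dual $X^*$ and pairing $\langle x,x^*\rangle=x^*(x)$. A multivalued operator $T:X\rightrightarrows X^*$ is identified with its graph $T\subset X\times X^*$; $T(x)=\{x^*:(x,x^* )\in T\}$, $\mathrm{dom}(T)=\{x:T(x)\ne\emptyset\}$, $Z_T=\{x:0\in T(x)\}$. For $A\subset X^*$, $\operatorname{cone}(A)=\{tv:t\ge0,v\in A\}$ and $\operatorname{cone}_\circ(A)=\{tv:t>0,v\in A\}$. For $C\subset X$, $N_C(x)=\{x^*: \langle y-x,x^*\rangle\le0\ \forall y\in C\}$. For $(x,x^* ),(y,y^* )\in X\times X^*$, write $(x,x^* )\sim_p(y,y^* )$ if either $\min\{\langle x-y,y^*\rangle,\langle y-x,x^*\rangle\}<0$ or $\langle x-y,y^*\rangle=\langle y-x,x^*\rangle=0$. The pseudomonotone polar is $T^\rho=\{(x,x^* ): (x,x^* )\sim_p(y,y^* )\ \forall (y,y^* )\in T\}$, and $T^\rho_D$ denotes its restriction to $\mathrm{dom}(T)$. $T$ is pseudomonotone if for all $(x,x^* ),(y,y^* )\in T$, $\langle y-x,x^*\rangle\ge0$ implies $\langle y-x,y^*\rangle\ge0$. Two operators $T,S$ are equivalent if $\mathrm{dom}(T)=\mathrm{dom}(S)$,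 $Z_T=Z_S$ and $\operatorname{cone}(T(x))=\operatorname{cone}(S(x))$ for all $x\in\mathrm{dom}(T)\setminus Z_T$. $T$ is $D$-maximal pseudomonotone if $T$ is pseudomonotone and there is a pseudomonotone operator $S$ equivalent to $T$ which has no proper pseudomonotone extension with the same domain. For $x\in Z_T$, $L(T,x)=\{y\in X:\exists y^*\in T(y),\ \langle x-y,y^*\rangle\ge0\}$, and $\widehat T(x)=N_{L(T,x)}(x)$ if $x\in Z_T$, $\widehat T(x)=\operatorname{cone}_\circ(T(x))$ if $x\in\mathrm{dom}(T)\setminus Z_T$, $\widehat T(x)=\emptyset$ if $x\notin\mathrm{dom}(T)$. *)

(* Defs.v *)
From Stdlib Require Import Reals.
Open Scope R_scope.
Set Implicit Arguments.

Record Banach := {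
  B :> Type;
  vzero : B;
  vadd : B -> B -> B;
  vopp : B -> B;
  vscal : R -> B -> B;
  vnorm : B -> R;
  vadd_assoc : forall x y z, vadd x (vadd y z) = vadd (vadd x y) z;
  vadd_comm : forall x y, vadd x y = vadd y x;
  vadd_zero : forall x, vadd x vzero = x;
  vadd_opp : forall x, vadd x (vopp x) = vzero;
  vscal_one : forall x, vscal 1 x = x;
  vscal_assoc : forall a b x, vscal a (vscal b x) = vscal (a * b) x;
  vscal_distr_v : forall a x y, vscal a (vadd x y) = vadd (vscal a x) (vscal a y);
  vscal_distr_s : forall a b x, vscal (a + b) x = vadd (vscal a x) (vscal b x);
  vnorm_nonneg : forall x, 0 <= vnorm x;
  vnorm_zero : forall x, vnorm x = 0 <-> x = vzero;
  vnorm_scal : forall a x, vnorm (vscal a x) = Rabs a * vnorm x;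
  vnorm_triangle : forall x y, vnorm (vadd x y) <= vnorm x + vnorm y;
  vcomplete : forall u : nat -> B,
    (forall eps, 0 < eps -> exists N, forall m n, (N <= m)%nat -> (N <= n)%nat ->
        vnorm (vadd (u m) (vopp (u n))) < eps) ->
    exists l, forall eps, 0 < eps -> exists N, forall n, (N <= n)%nat ->
        vnorm (vadd (u n) (vopp l)) < eps
}.

Definition vsub {X : Banach} (x y : X) : X := vadd X x (vopp X y).

Record dual (X : Banach) := {
  dfun :> X -> R;
  dfun_add : forall x y, dfun (vadd X x y) = dfun x + dfun y;
  dfun_scal : forall a x, dfun (vscal X a x) = a * dfun x;
  dfun_bnd : exists M, forall x, Rabs (dfun x) <= M * vnorm X x
}.

Definition pairing {X : Banach} (x : X) (xs : dual X) : R := dfun xs x.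

Definition op (X : Banach) := X -> dual X -> Prop.

Definition dom (X : Banach) (T : op X) (x : X) : Prop := exists xs, T x xs.

Definition is_zero_dual (X : Banach) (xs : dual X) : Prop := forall y, dfun xs y = 0.

Definition zeros (X : Banach) (T : op X) (x : X) : Prop :=
  exists z, T x z /\ is_zero_dual z.

Definition cone (X : Banach) (A : dual X -> Prop) (w : dual X) : Prop :=
  exists t v, 0 <= t /\ A v /\ forall y, dfun w y = t * dfun v y.
Definition cone_o (X : Banach) (A : dual X -> Prop) (w : dual X) : Prop :=
  exists t v, 0 < t /\ A v /\ forall y, dfun w y = t * dfun v y.

Definition normal_cone (X : Banach) (C : X -> Prop) (x : X) (xs : dual X) : Prop :=
  forall y, C y -> pairing (vsub y x) xs <= 0.

Definition sim_p (X : Banach) (x : X) (xs : dual X) (y : X) (ys : dual X) : Prop :=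
  Rmin (pairing (vsub x y) ys) (pairing (vsub y x) xs) < 0 \/
  (pairing (vsub x y) ys = 0 /\ pairing (vsub y x) xs = 0).

Definition polar (X : Banach) (T : op X) : op X :=
  fun x xs => forall y ys, T y ys -> sim_p x xs y ys.
Definition polarD (X : Banach) (T : op X) : op X :=
  fun x xs => dom T x /\ polar T x xs.

Definition pseudomonotone (X : Banach) (T : op X) : Prop :=
  forall x xs y ys, T x xs -> T y ys ->
    pairing (vsub y x) xs >= 0 -> pairing (vsub y x) ys >= 0.

Definition op_equivalent (X : Banach) (T S : op X) : Prop :=
  (forall x, dom T x <-> dom S x) /\
  (forall x, zeros T x <-> zeros S x) /\
  (forall x, dom T x -> ~ zeros T x -> forall w, cone (T x) w <-> cone (S x) w).

Definition no_proper_pm_extension_same_dom (X : Banach) (S : op X) : Prop :=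
  forall S' : op X, pseudomonotone S' ->
    (forall x xs, S x xs -> S' x xs) ->
    (forall x, dom S' x <-> dom S x) ->
    forall x xs, S' x xs -> S x xs.

Definition D_maximal_pm (X : Banach) (T : op X) : Prop :=
  pseudomonotone T /\
  exists S : op X, pseudomonotone S /\ op_equivalent T S /\
                   no_proper_pm_extension_same_dom S.

Definition Lset (X : Banach) (T : op X) (x : X) (y : X) : Prop :=
  exists ys, T y ys /\ pairing (vsub x y) ys >= 0.

Definition That (X : Banach) (T : op X) : op X :=
  fun x xs =>
    (zeros T x /\ normal_cone (Lset T x) x xs) \/
    (dom T x /\ ~ zeros T x /\ cone_o (T x) xs).

Definition op_eq (X : Banach) (T S : op X) : Prop :=
  forall x xs, T x xs <-> S x xs.

Definition convex_set {X : Banach} (C : X -> Prop) : Prop :=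
  forall x y t, C x -> C y -> 0 <= t <= 1 ->
    C (vadd X (vscal X t x) (vscal X (1 - t) y)).

(* Main.v *)
Require Import Defs.
From Stdlib Require Import Reals Lra Classical.
Open Scope R_scope.

Section S.
Variable X : Banach.

Lemma d_zero (f : dual X) : f (vzero X) = 0.
Proof. pose proof (dfun_add f (vzero X) (vzero X)) as H.
  rewrite vadd_zero in H. lra. Qed.

Lemma d_opp (f : dual X) x : f (vopp X x) = - f x.
Proof. pose proof (dfun_add f x (vopp X x)) as H.
  rewrite vadd_opp, d_zero in H. lra. Qed.

Lemma pair_sub (f : dual X) a b : pairing (vsub a b) f = f a - f b.
Proof. unfold pairing, vsub. rewrite dfun_add, d_opp. ring. Qed.

Definition dzero : dual X.
Proof.
  refine {| dfun := fun _ => 0 |}.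
  - intros; ring.
  - intros; ring.
  - exists 0. intros. rewrite Rabs_R0. pose proof (vnorm_nonneg X x). nra.
Defined.

Lemma dzero_zero : is_zero_dual dzero.
Proof. intro y. reflexivity. Qed.

Lemma simp_E (a : X) (a1 : dual X) (b : X) (b1 : dual X) : sim_p a a1 b b1 <->
  (b1 a - b1 b < 0 \/ a1 b - a1 a < 0 \/ (b1 a - b1 b = 0 /\ a1 b - a1 a = 0)).
Proof.
  unfold sim_p. rewrite !pair_sub. unfold Rmin.
  destruct (Rle_dec (b1 a - b1 b) (a1 b - a1 a)); split; intros H; lra.
Qed.

Lemma simp_step (a : X) (a1 : dual X) (b : X) (b1 : dual X) : sim_p a a1 b b1 -> a1 b - a1 a >= 0 -> b1 b - b1 a >= 0.
Proof. rewrite simp_E. lra. Qed.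

Lemma simp_sym (a : X) (a1 : dual X) (b : X) (b1 : dual X) : sim_p a a1 b b1 -> sim_p b b1 a a1.
Proof. rewrite !simp_E. lra. Qed.

Lemma pm_simp (S : op X) : pseudomonotone S -> forall a a1 b b1, S a a1 -> S b b1 -> sim_p a a1 b b1.
Proof.
  intros hS a a1 b b1 Ha Hb. rewrite simp_E.
  pose proof (hS a a1 b b1 Ha Hb) as H1. pose proof (hS b b1 a a1 Hb Ha) as H2.
  rewrite !pair_sub in H1, H2.
  destruct (Rlt_dec (b1 a - b1 b) 0); [lra|].
  destruct (Rlt_dec (a1 b - a1 a) 0); [lra|].
  right; right. 
  assert (b1 b - b1 a >= 0) by (apply H1; lra).
  assert (a1 a - a1 b >= 0) by (apply H2; lra). lra.
Qed.

Lemma simp_pm (S : op X) : (forall a a1 b b1, S a a1 -> S b b1 -> sim_p a a1 b b1) -> pseudomonotone S.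
Proof.
  intros H a a1 b b1 Ha Hb. rewrite !pair_sub. apply simp_step. apply H; auto.
Qed.


Variable T : op X.
Hypothesis hT : pseudomonotone T.

Lemma pmT (x : X) (xs : dual X) (y : X) (ys : dual X) : T x xs -> T y ys -> xs y - xs x >= 0 -> ys y - ys x >= 0.
Proof. intros. pose proof (hT x xs y ys) as H'. rewrite !pair_sub in H'. auto. Qed.

Lemma T_sub_That x xs : T x xs -> That T x xs.
Proof.
  intros Hx. destruct (classic (zeros T x)) as [Hz|Hz].
  - left. split; auto. intros y [ys [Hy Hp]]. rewrite pair_sub in *.
    pose proof (pmT y ys x xs Hy Hx). lra.
  - right. split; [exists xs; auto|]. split; auto.
    exists 1, xs. repeat split; auto; [lra|]. intros; ring.
Qed.

Lemma That_pm : pseudomonotone (That T).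
Proof.
  apply simp_pm. intros x xs y ys Hx Hy. apply simp_E.
  cut (xs y - xs x >= 0 -> ys y - ys x >= 0).
  2:{
  destruct Hy as [[Hyz HN]|[Hyd [Hyz [b [v [Hb [Hv Hys]]]]]]].
  - intros Hge. unfold normal_cone in HN.
    assert (Lset T y x) as HL.
    { destruct Hx as [[[z [Hz Hz0]] _]|[_ [_ [a [u [Ha [Hu Hxs]]]]]]].
      - exists z. split; auto. rewrite pair_sub, !Hz0. lra.
      - exists u. split; auto. rewrite pair_sub. rewrite !Hxs in Hge. nra. }
    specialize (HN x HL). rewrite pair_sub in HN. lra.
  - intros Hge. rewrite !Hys.
    assert (v y - v x >= 0).
    { destruct Hx as [[[z [Hz Hz0]] _]|[_ [_ [a [u [Ha [Hu Hxs]]]]]]].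
      - apply (pmT x z y v Hz Hv). rewrite !Hz0. lra.
      - apply (pmT x u y v Hu Hv). rewrite !Hxs in Hge. nra. }
    nra. }
  cut (ys x - ys y >= 0 -> xs x - xs y >= 0).
  2:{ clear - hT Hx Hy.
  destruct Hx as [[Hyz HN]|[Hyd [Hyz [b [v [Hb [Hv Hys]]]]]]].
  - intros Hge. unfold normal_cone in HN.
    assert (Lset T x y) as HL.
    { destruct Hy as [[[z [Hz Hz0]] _]|[_ [_ [a [u [Ha [Hu Hxs]]]]]]].
      - exists z. split; auto. rewrite pair_sub, !Hz0. lra.
      - exists u. split; auto. rewrite pair_sub. rewrite !Hxs in Hge. nra. }
    specialize (HN y HL). rewrite pair_sub in HN. lra.
  - intros Hge. rewrite !Hys.
    assert (v x - v y >= 0).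
    { destruct Hy as [[[z [Hz Hz0]] _]|[_ [_ [a [u [Ha [Hu Hxs]]]]]]].
      - apply (pmT y z x v Hz Hv). rewrite !Hz0. lra.
      - apply (pmT y u x v Hu Hv). rewrite !Hxs in Hge. nra. }
    nra. }
  intros H1 H2. lra.
Qed.

Lemma That_dom x : dom (That T) x <-> dom T x.
Proof.
  split.
  - intros [xs [[[z [Hz _]] _]|[Hd _]]]; [exists z|]; auto.
  - intros [xs Hx]. exists xs. apply T_sub_That; auto.
Qed.

Lemma That_zeros x : zeros (That T) x <-> zeros T x.
Proof.
  split.
  - intros [z [[[Hz _]|[_ [Hn [t [v [Ht [Hv Hzv]]]]]]] Hz0]]; auto.
    exfalso. apply Hn. exists v. split; auto. intro y.
    specialize (Hz0 y). rewrite Hzv in Hz0. nra.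
  - intros [z [Hz Hz0]]. exists z. split; auto. apply T_sub_That; auto.
Qed.

Lemma That_equiv : op_equivalent T (That T).
Proof.
  split; [intro x; rewrite That_dom; tauto|].
  split; [intro x; rewrite That_zeros; tauto|].
  intros x Hd Hnz w. split.
  - intros [t [v [Ht [Hv Hw]]]]. exists t, v. split; [auto|]. split; [|auto].
    right. split; [auto|]. split; [auto|]. exists 1, v. split; [lra|]. split; [auto|].
    intros; ring.
  - intros [t [u [Ht [[[Hz _]|[_ [_ [s [v [Hs [Hv Hu]]]]]]] Hw]]]]; [contradiction|].
    exists (t * s), v. repeat split; auto; [nra|]. intro y. rewrite Hw, Hu. ring.
Qed.

Lemma That_sub_polarD x xs : That T x xs -> polarD T x xs.
Proof.
  intros H. split.
  - apply That_dom. exists xs; auto.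
  - intros y ys Hy. apply (pm_simp _ That_pm); auto. apply T_sub_That; auto.
Qed.


Lemma mid_val (f : dual X) (x y : X) :
  f (vadd X (vscal X (/2) x) (vscal X (1 - /2) y)) = /2 * f x + (1 - /2) * f y.
Proof. rewrite dfun_add, !dfun_scal. reflexivity. Qed.

Lemma part1 : op_eq (That T) (polarD T) -> D_maximal_pm T.
Proof.
  intros H. split; auto. exists (That T). split; [apply That_pm|].
  split; [apply That_equiv|].
  intros S' hS' Hsub Hdom x xs Hx. apply H. split.
  - apply That_dom, Hdom. exists xs; auto.
  - intros y ys Hy. apply (pm_simp _ hS'); auto. apply Hsub, T_sub_That; auto.
Qed.

Lemma part2 : convex_set (dom T) -> D_maximal_pm T -> op_eq (That T) (polarD T).
Proof.
  intros Hconv [_ [S [hS [[HdS [HzS HcS]] Hmax]]]] x xs. split; [apply That_sub_polarD|].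
  intros [Hdx Hpol]. destruct (classic (zeros T x)) as [Hzx|Hzx].
  - left. split; auto. intros y [ys [Hy Hp]]. rewrite pair_sub in *.
    specialize (Hpol y ys Hy). rewrite simp_E in Hpol. lra.
  - right. split; auto. split; auto.
    assert (C : forall y ys, S y ys -> sim_p x xs y ys).
    { intros y ys Hy. destruct (classic (zeros T y)) as [Hzy|Hzy].
      - destruct Hzy as [z0 [Hz0 Hz0z]].
        pose proof (Hpol y z0 Hz0) as P0. rewrite simp_E, !Hz0z in P0.
        apply simp_E. apply NNPP. intro Hn.
        assert (E1 : xs y - xs x = 0) by lra.
        assert (E2 : ys x - ys y > 0) by lra.
        set (z := vadd X (vscal X (/2) x) (vscal X (1 - /2) y)).
        assert (Hdz : dom T z) by (apply Hconv; auto; [exists z0; auto|lra]).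
        destruct (classic (zeros T z)) as [Hzz|Hzz].
        + apply HzS in Hzz. destruct Hzz as [w [Hw Hw0]].
          pose proof (hS z w y ys Hw Hy) as P. rewrite !pair_sub, !Hw0 in P.
          unfold z in P. rewrite mid_val in P. lra.
        + assert (Hdz' : dom S z) by (apply HdS; auto).
          destruct Hdz' as [w Hw].
          assert (Hcw : cone (S z) w).
          { exists 1, w. split; [lra|]. split; auto. intros; ring. }
          apply (HcS z Hdz Hzz) in Hcw. destruct Hcw as [t [v [Ht [Hv Hwv]]]].
          pose proof (Hpol z v Hv) as P1. rewrite simp_E in P1.
          pose proof (pmT y z0 z v Hz0 Hv) as P2. rewrite !Hz0z in P2.
          pose proof (hS z w y ys Hw Hy) as P3. rewrite !pair_sub in P3.
          assert (Mz: forall f : dual X, f z = /2 * f x + (1 - /2) * f y) by (intro; apply mid_val).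
          rewrite !Hwv, !Mz in P3. rewrite !Mz in P1, P2.
          assert (P2' := P2 ltac:(lra)). rewrite (Mz xs) in P1.
          assert (v x - v y = 0) by (destruct P1 as [P1|[P1|P1]]; lra).
          assert (ys y - (/ 2 * ys x + (1 - / 2) * ys y) >= 0) by (apply P3; nra).
          lra.
      - assert (Hdy : dom T y) by (apply HdS; exists ys; auto).
        assert (Hcy : cone (S y) ys).
        { exists 1, ys. split; [lra|]. split; auto. intros; ring. }
        apply (HcS y Hdy Hzy) in Hcy. destruct Hcy as [t [v [Ht [Hv Hyv]]]].
        destruct (Req_dec t 0) as [Ht0|Ht0].
        + exfalso. apply Hzy, HzS. exists ys. split; auto. intro u. rewrite Hyv, Ht0. ring.
        + pose proof (Hpol y v Hv) as P. rewrite simp_E in P. apply simp_E.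
          rewrite !Hyv. assert (0 < t) by lra.
          destruct P as [P|[P|P]]; [left; nra|right; left; lra|right; right; split; nra]. }
    set (S' := fun a a1 => S a a1 \/ (a = x /\ a1 = xs)).
    assert (HS' : pseudomonotone S').
    { apply simp_pm. intros a a1 b b1 [Ha|[-> ->]] [Hb|[-> ->]].
      - apply (pm_simp _ hS); auto.
      - apply simp_sym, C; auto.
      - apply C; auto.
      - apply simp_E. lra. }
    assert (Hsx : S x xs).
    { apply (Hmax S' HS'); [intros; left; auto| |right; auto].
      intro a. split.
      - intros [a1 [Ha|[-> ->]]]; [exists a1; auto|]. apply HdS; auto.
      - intros [a1 Ha]. exists a1. left; auto. }
    assert (Hcx : cone (S x) xs).
    { exists 1, xs. split; [lra|]. split; auto. intros; ring. }
    apply (HcS x Hdx Hzx) in Hcx. destruct Hcx as [t [v [Ht [Hv Hxv]]]].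
    destruct (Req_dec t 0) as [Ht0|Ht0].
    + exfalso. apply Hzx, HzS. exists xs. split; auto. intro u. rewrite Hxv, Ht0. ring.
    + exists t, v. split; [lra|]. split; auto.
Qed.

End S.

Theorem mainTheorem15 (X : Banach) (T : op X) (hT : pseudomonotone T) :
  (op_eq (That T) (polarD T) -> D_maximal_pm T) /\
  (convex_set (dom T) -> D_maximal_pm T -> op_eq (That T) (polarD T)).
Proof.
  split; [apply part1; auto|apply part2; auto].
Qed.
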